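(* Let $h,m$ be positive integers with $h=1$ or $\omega(m)=1$, and let $c$ be a positive integer such that no $\mathrm{CC}^h[m]$-circuit computes the $n$-ary conjunction $\mathrm{AND}_n$ for any $n>c$. Then every non-constant Boolean function computable by a $\mathrm{CC}^h[m]$-circuit has balance at least $2^{1-c}$.
   Context: For an integer $m\ge 1$ and $A\subseteq\{0,\dots,m-1\}$, a gate $\mathrm{MOD}_m^A$ takes finitely many Boolean inputs (counted with multiplicity) and outputs $1$ if their sum modulo $m$ lies in $A$, and $0$ otherwise. A $\mathrm{CC}^h[m]$-circuit is a depth-$h$ Boolean circuit all of whose gates are of the form $\mathrm{MOD}_m^A$ ($A$ may vary between gates), with Boolean variable inputs (constants allowed) and multiple wires allowed. $\omega(m)$ is the number of distinct prime divisors of $m$. The balance of an $n$-ary Boolean function $f$ is $\mathrm{bal}(f)=1-\frac{\big||f^{-1}(0)|-|f^{-1}(1)|\big|}{2^n}$. *)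

(* Defs.v *)
From mathcomp Require Import all_boot all_order all_algebra.
Set Implicit Arguments. Unset Strict Implicit. Unset Printing Implicit Defensive.
Import Order.TTheory GRing.Theory Num.Theory.

Definition boolfun (n : nat) := {ffun 'I_n -> bool} -> bool.

Definition omega (m : nat) : nat := size (primes m).

(* The gate MOD_m^A applied to (the values of) a list of input wires
   (multiplicities allowed); A is a predicate on nat, only its restriction
   to {0,...,m-1} matters. *)
Definition modgate (m : nat) (A : pred nat) (s : seq bool) : bool :=
  ((\sum_(b <- s) (b : nat)) %% m) \in A.

(* Circuits are unfolded into formulas, which
   does not change computed functions nor depth. *)
Fixpoint CC (m h n : nat) (f : boolfun n) {struct h} : Prop :=
  match h with
  | 0 => (exists b : bool, forall x, f x = b) \/ (exists i : 'I_n, forall x, f x = x i)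
  | h'.+1 => CC m h' f \/
      exists (A : pred nat) (gs : seq (boolfun n)),
        (forall k : nat, (k < size gs)%N -> CC m h' (nth (fun _ => false) gs k)) /\
        forall x, f x = modgate m A [seq g x | g <- gs]
  end.

Definition AND_fun (n : nat) : boolfun n := fun x => [forall i, x i].

Definition nonconstant (n : nat) (f : boolfun n) : Prop :=
  exists x y, f x != f y.

Local Open Scope ring_scope.
Definition bal (n : nat) (f : boolfun n) : rat :=
  1 - `| (#|[pred x | ~~ f x]|%:R : rat) - #|[pred x | f x]|%:R | / 2 ^+ n.

(* Main.v *)
Require Import Defs.
From mathcomp Require Import all_boot all_order all_algebra.
From mathcomp Require Import zify ring lra.
Import Order.TTheory GRing.Theory Num.Theory.
Set Implicit Arguments. Unset Strict Implicit. Unset Printing Implicit Defensive.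

Fixpoint allP {T} (P : T -> Prop) (L : seq T) : Prop :=
  match L with [::] => True | g :: L' => P g /\ allP P L' end.

Lemma allP_nth T (P : T -> Prop) L x0 : allP P L -> P x0 -> forall k, P (nth x0 L k).
Proof.
elim: L => [|g L IH] /= HL H0 k; first by rewrite nth_nil.
case: k => [|k] /=; [exact: HL.1 | exact: IH HL.2 H0 k].
Qed.

Lemma allP_cat T (P : T -> Prop) L1 L2 : allP P L1 -> allP P L2 -> allP P (L1 ++ L2).
Proof. by elim: L1 => [|g L IH] //= [H1 H2] H; split => //; apply: IH. Qed.

Lemma allP_impl T (P Q : T -> Prop) L : (forall x, P x -> Q x) -> allP P L -> allP Q L.
Proof. by move=> H; elim: L => [|g L IH] //= [H1 H2]; split; [apply: H|apply: IH]. Qed.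

Lemma CC_const m h n (b : bool) : CC m h (fun _ : {ffun 'I_n -> bool} => b).
Proof. by elim: h => [|h IH] /=; [left; exists b | left]. Qed.

Lemma CC_ext m h n (f g : boolfun n) : (forall x, f x = g x) -> CC m h f -> CC m h g.
Proof.
elim: h f g => [|h IH] f g E /=.
- by case=> [[b Hb]|[i Hi]]; [left; exists b | right; exists i] => x; rewrite -E.
- case=> [Hf|[A [gs [Hgs Hf]]]]; first by left; exact: IH E Hf.
  by right; exists A, gs; split=> // x; rewrite -E.
Qed.

Definition lit_map n d (s : {ffun 'I_d -> bool} -> {ffun 'I_n -> bool}) :=
  forall i, (exists b, forall z, s z i = b) \/ (exists j (t : bool), forall z, s z i = (z j == t)).

Lemma seq_lift m n d (s : {ffun 'I_d -> bool} -> {ffun 'I_n -> bool})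
  (P : boolfun n -> Prop) (Q : boolfun d -> Prop) :
  (forall g, P g -> exists L : seq (boolfun d), allP Q L /\
      forall z, (g (s z) : nat) = \sum_(g <- L) (g z : nat) %[mod m]) ->
  forall gs : seq (boolfun n), (forall k, (k < size gs)%N -> P (nth (fun _ => false) gs k)) ->
  exists L : seq (boolfun d), allP Q L /\
    forall z, \sum_(g <- gs) (g (s z) : nat) = \sum_(g <- L) (g z : nat) %[mod m].
Proof.
move=> H; elim=> [|g gs IH] Hgs.
  by exists [::]; split=> // z; rewrite !big_nil.
have [L1 [HL1 E1]] := H g (Hgs 0%N erefl).
have [L2 [HL2 E2]] := IH (fun k hk => Hgs k.+1 hk).
exists (L1 ++ L2); split; first exact: allP_cat.
by move=> z; rewrite big_cons big_cat /= -modnDm E1 E2 modnDm.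
Qed.

Lemma sum_list m n d (s : {ffun 'I_d -> bool} -> {ffun 'I_n -> bool}) :
  (0 < m)%N -> lit_map s -> forall h (f : boolfun n), CC m h f ->
  exists L : seq (boolfun d), allP (@CC m h d) L /\
      forall z, (f (s z) : nat) = \sum_(g <- L) (g z : nat) %[mod m].
Proof.
move=> Hm Hs; elim => [|h IH] f /=.
- case=> [[b Hb]|[i Hi]].
  + exists [:: fun _ => b]; split; first by split=> //; left; exists b.
    by move=> z; rewrite big_seq1 Hb.
  + case: (Hs i) => [[b Hb]|[j [t Ht]]].
    * exists [:: fun _ => b]; split; first by split => //; left; exists b.
      by move=> z; rewrite big_seq1 Hi Hb.
    * case: t Ht => Ht.
      - exists [:: fun z : {ffun 'I_d -> bool} => z j]; split; first by split=> //; right; exists j.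
        by move=> z; rewrite big_seq1 Hi Ht eqb_id.
      - exists (nseq m.-1 (fun z : {ffun 'I_d -> bool} => z j) ++ [:: fun _ => true]); split.
        + apply: allP_cat; last by split=> //; left; exists true.
          by elim: m.-1 => [|k IHk] //=; split=> //; right; exists j.
        + move=> z; rewrite big_cat big_seq1 big_nseq iter_addn Hi Ht.
          case: (z j) => /=; last by [].
          idtac.
          by rewrite mul1n addn0 addn1 prednK // modnn mod0n.
- case=> [Hf|[A [gs [Hgs Hf]]]].
  + have [L [HL E]] := IH f Hf; exists L; split => //.
    by apply: allP_impl HL => g Hg; left.
  + exists [:: fun z => f (s z)]; split.
    * split=> //; right.
      have [L [HL E]] := seq_lift IH Hgs.
      exists A, L; split; first by move=> k _; apply: allP_nth HL (CC_const _ _ _ false) k.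
      by move=> z; rewrite Hf /modgate !big_map E.
    * by move=> z; rewrite big_seq1.
Qed.

Lemma trich m h n (f : boolfun n) : (0 < m)%N -> CC m h f ->
  (exists b, forall x, f x = b) \/ (exists i, forall x, f x = x i) \/
  (forall d (s : {ffun 'I_d -> bool} -> {ffun 'I_n -> bool}), lit_map s ->
     forall b : bool, CC m h (fun z => b (+) f (s z))).
Proof.
move=> Hm; elim: h f => [|h IH] f /=.
- by case=> [H|H]; [left|right; left].
- case=> [Hf|[A [gs [Hgs Hf]]]].
  + case: (IH f Hf) => [H|[H|H]]; [left|right;left|right;right] => //.
    by move=> d s Hs b; left; exact: H.
  + right; right => d s Hs b; right.
    have [L [HL E]] := seq_lift (sum_list Hm Hs (h:=h)) Hgs.
    exists (fun k => b (+) (k \in A)), L; split.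
      by move=> k _; apply: allP_nth HL (CC_const _ _ _ false) k.
    by move=> z; rewrite Hf /modgate !big_map E.
Qed.

Definition cube n (F : {set 'I_n}) (q x : {ffun 'I_n -> bool}) : bool :=
  [forall i, (i \notin F) ==> (x i == q i)].

Lemma comb n (c : nat) : forall k (F : {set 'I_n}) q (S : {set {ffun 'I_n -> bool}}),
  #|F| = k -> (forall x, x \in S -> cube F q x) -> (0 < #|S|)%N ->
  (#|S| * expn 2 c < expn 2 k)%N ->
  exists (F' : {set 'I_n}) p, [/\ F' \subset F, (c < #|F'|)%N, p \in S &
     forall x, cube F' p x -> x \in S -> x = p].
Proof.
elim=> [|k IH] F q S HF HS S0 Sc.
  by have := expn_gt0 2 c; move: Sc; rewrite expn0; nia.
have [S1|S2] := leqP #|S| 1.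
  have /cards1P [p Sp] : #|S| == 1%N by rewrite eqn_leq S1 S0.
  exists F, p; split => //.
  - have : (expn 2 c < expn 2 k.+1)%N by move: Sc; rewrite Sp cards1 mul1n.
    by rewrite ltn_exp2l // HF.
  - by rewrite Sp set11.
  - by move=> x _; rewrite Sp inE => /eqP.
have [x Sx] : exists x, x \in S by apply/set0Pn; rewrite -card_gt0.
have [y Sy] : exists y, y \in S :\ x.
  by apply/set0Pn; rewrite -card_gt0; move: S2; rewrite (cardsD1 x S) Sx.
move: Sy; rewrite in_setD1 => /andP [yx Sy].
have [i xyi] : exists i, x i != y i.
  case: (boolP [exists i, x i != y i]) => [/existsP //|/existsPn H].
  exfalso; move/eqP: yx; apply; apply/ffunP => j.
  by move: (H j) => /negPn /eqP.
have iF : i \in F.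
  case: (boolP (i \in F)) => // iF; exfalso.
  move: (HS x Sx) (HS y Sy) => /forallP /(_ i) /implyP /(_ iF) /eqP Hx
     /forallP /(_ i) /implyP /(_ iF) /eqP Hy.
  by rewrite Hx Hy eqxx in xyi.
have step : forall (Sb : {set {ffun 'I_n -> bool}}) (b : bool),
    (forall z, (z \in Sb) = (z \in S) && (z i == b)) -> (0 < #|Sb|)%N ->
    (#|Sb| * 2 <= #|S|)%N ->
    exists (F' : {set 'I_n}) p, [/\ F' \subset F, (c < #|F'|)%N, p \in S &
       forall x, cube F' p x -> x \in S -> x = p].
  move=> Sb b HSb Sb0 Sb2.
  have [w Sw] : exists w, w \in Sb by apply/set0Pn; rewrite -card_gt0.
  have HFk : #|F :\ i| = k by move: HF; rewrite (cardsD1 i F) iF add1n => [[]].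
  have Hc : forall z, z \in Sb -> cube (F :\ i) w z.
    move=> z Sz; apply/forallP => j; apply/implyP.
    rewrite in_setD1 negb_and negbK => /orP [/eqP ->|jF].
      by move: Sz Sw; rewrite !HSb => /andP [_ /eqP ->] /andP [_ /eqP ->].
    move: Sz Sw; rewrite !HSb => /andP [Sz _] /andP [Sw' _].
    move: (HS z Sz) (HS w Sw') => /forallP/(_ j)/implyP/(_ jF)/eqP ->
       /forallP/(_ j)/implyP/(_ jF)/eqP ->.
    exact: eqxx.
  have Hlt : (#|Sb| * expn 2 c < expn 2 k)%N.
    move: Sc; rewrite expnS => Sc.
    have := leq_mul Sb2 (leqnn (expn 2 c)); nia.
  have [F' [p [F'F cF' pS Hp]]] := IH (F :\ i) w Sb HFk Hc Sb0 Hlt.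
  have pS' : p \in S by move: pS; rewrite HSb => /andP [].
    exists F', p; split => //.
    + exact: subset_trans F'F (subD1set F i).
    + move=> z zc zS.
      have iF' : i \notin F'.
        apply/negP => /(subsetP F'F); by rewrite in_setD1 eqxx.
      have zi : z i = p i.
        move: zc => /forallP /(_ i) /implyP H; apply/eqP; exact: H.
      apply: Hp => //.
      by move: pS; rewrite !HSb zS zi => /andP [_ ->].
pose Sb b := [set z in S | z i == b].
have HSb : forall b z, (z \in Sb b) = (z \in S) && (z i == b) by move=> b z; rewrite inE.
have card2 : forall b, (#|Sb b| + #|Sb (~~ b)| = #|S|)%N.
  move=> b; rewrite -(cardsID [set z : {ffun 'I_n -> bool} | z i == b] S); congr (_ + _); apply: eq_card => z;
  rewrite !inE //; by case: (z \in S); case: (z i); case: b.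
have yi : y i = ~~ x i by move: xyi; case: (x i); case: (y i).
have c1 : (0 < #|Sb (x i)|)%N by apply/card_gt0P; exists x; rewrite HSb Sx eqxx.
have c2 : (0 < #|Sb (~~ x i)|)%N by apply/card_gt0P; exists y; rewrite HSb Sy yi eqxx.
have := card2 (x i).
case: (leqP #|Sb (x i)| #|Sb (~~ x i)|) => H E.
  by apply: (step (Sb (x i)) (x i)) => //; lia.
by apply: (step _ (~~ x i)) => //; lia.
Qed.

Lemma card_proj n (i : 'I_n) :
  #|[pred x : {ffun 'I_n -> bool} | ~~ x i]| = #|[pred x : {ffun 'I_n -> bool} | x i]|.
Proof.
pose phi (x : {ffun 'I_n -> bool}) := [ffun j => if j == i then ~~ x j else x j].
have phiK : involutive phi.
  by move=> x; apply/ffunP => j; rewrite !ffunE; case: (j == i) => //; rewrite negbK.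
rewrite -(card_image (can_inj phiK) [pred x : {ffun 'I_n -> bool} | x i]).
apply: eq_card => y; rewrite -{2}(phiK y) mem_image; last exact: can_inj phiK.
by rewrite !inE ffunE eqxx.
Qed.

Local Open Scope ring_scope.

Lemma final_arith (n c a b : nat) : (a + b = expn 2 n)%N ->
  (expn 2 n <= a * expn 2 c)%N -> (expn 2 n <= b * expn 2 c)%N ->
  (2 : rat) ^ (1 - c%:Z) <= 1 - `| (a%:R : rat) - b%:R | / 2 ^+ n.
Proof.
move=> Hab Ha Hb.
have -> : (2 : rat) ^ (1 - c%:Z) = 2 / 2 ^+ c.
  by rewrite expfzDr // -exprnN expr1z.
have N : (a%:R + b%:R : rat) = 2 ^+ n by rewrite -natrD Hab natrX.
have Ha' : (2 ^+ n : rat) <= a%:R * 2 ^+ c.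
  by move: Ha; rewrite -(ler_nat rat) natrM !natrX.
have Hb' : (2 ^+ n : rat) <= b%:R * 2 ^+ c.
  by move: Hb; rewrite -(ler_nat rat) natrM !natrX.
rewrite -N in Ha' Hb' *.
have C0 : (0 : rat) < 2 ^+ c by apply: exprn_gt0.
have a0 : (0 : rat) <= a%:R by [].
have b0 : (0 : rat) <= b%:R by [].
have ab0 : (0 : rat) < a%:R + b%:R by rewrite N exprn_gt0.
rewrite -subr_ge0.
have [hab|hab] := lerP (a%:R : rat) b%:R.
  have -> : 1 - (b%:R - a%:R) / (a%:R + b%:R) - 2 / 2 ^+ c
     = 2 * (a%:R * 2 ^+ c - (a%:R + b%:R)) / ((a%:R + b%:R) * 2 ^+ c) :> rat.
    by field; rewrite ?gt_eqF.
  by apply: divr_ge0; [apply: mulr_ge0 => //; rewrite subr_ge0 | apply: mulr_ge0; apply: ltW].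
have -> : 1 - (a%:R - b%:R) / (a%:R + b%:R) - 2 / 2 ^+ c
   = 2 * (b%:R * 2 ^+ c - (a%:R + b%:R)) / ((a%:R + b%:R) * 2 ^+ c) :> rat.
  by field; rewrite ?gt_eqF.
by apply: divr_ge0; [apply: mulr_ge0 => //; rewrite subr_ge0 | apply: mulr_ge0; apply: ltW].
Qed.

Theorem corollary2p4 (h m c : nat) :
  (0 < h)%N -> (0 < m)%N -> (h = 1%N \/ omega m = 1%N) -> (0 < c)%N ->
  (forall n : nat, (c < n)%N -> ~ CC m h (@AND_fun n)) ->
  forall (n : nat) (f : boolfun n), CC m h f -> nonconstant f ->
    (2 : rat) ^ (1 - c%:Z) <= bal f.
Proof.
move=> h0 m0 _ c0 noAND n f Hf [x0 [y0 Hxy]].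
have ab : (#|[pred x | ~~ f x]| + #|[pred x | f x]| = expn 2 n)%N.
  have := cardC [pred x | f x]; rewrite card_ffun card_bool card_ord addnC => <-.
  by congr (_ + _); apply: eq_card => x; rewrite !inE.
have key : forall (g : boolfun n) (t : bool), (forall x, g x = t (+) f x) ->
    (0 < #|[pred x | g x]|)%N -> (expn 2 n <= #|[pred x | g x]| * expn 2 c)%N.
  move=> g t Hg g0; rewrite leqNgt; apply/negP => Hlt.
  case: (trich m0 Hf) => [[b Hb]|[[i Hi]|H]].
  - by move: Hxy; rewrite !Hb eqxx.
  -
    have E : #|[pred x | ~~ f x]| = #|[pred x | f x]|.
      rewrite (eq_card (B := [pred x : {ffun 'I_n -> bool} | ~~ x i])); last by move=> x; rewrite !inE Hi.
      rewrite (card_proj i); apply: eq_card => x; by rewrite !inE Hi.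
    have c2 : (2 <= expn 2 c)%N by rewrite -{1}(expn1 2) leq_exp2l.
    have Eg : #|[pred x | g x]| = #|[pred x | f x]|.
      case: t Hg => Hg.
        by rewrite -E; apply: eq_card => x; rewrite !inE Hg.
      by apply: eq_card => x; rewrite !inE Hg.
    rewrite Eg in Hlt; nia.
  - have S0 : (0 < #|[set x | g x]|)%N.
      by rewrite (eq_card (B := [pred x | g x])) // => x; rewrite !inE.
    have Sc : (#|[set x | g x]| * expn 2 c < expn 2 #|[set: 'I_n]|)%N.
      rewrite cardsT card_ord (eq_card (B := [pred x | g x])) //.
      by move=> x; rewrite !inE.
    have [F' [p [_ cF' pS Hp]]] := comb (k := #|[set: 'I_n]|) (q := x0) erefl
       (fun x _ => introT forallP (fun i => introT implyP (fun H => False_ind _ (negP H (in_setT i))))) S0 Sc.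
    have [i0 i0F] : exists i0, i0 \in F' by apply/card_gt0P; apply: leq_ltn_trans cF'.
    pose s := fun z : {ffun 'I_#|F'| -> bool} =>
      [ffun i => if i \in F' then z (enum_rank_in i0F i) == p i else p i].
    have Hs : lit_map s.
      move=> i; case: (boolP (i \in F')) => iF.
        by right; exists (enum_rank_in i0F i), (p i) => z; rewrite ffunE iF.
      by left; exists (p i) => z; rewrite ffunE (negbTE iF).
    have E : forall z, AND_fun z = g (s z).
      move=> z.
      have sc : cube F' p (s z).
        by apply/forallP => i; apply/implyP => iF; rewrite ffunE (negbTE iF).
      apply/idP/idP.
      + move=> /forallP Hz.
        have -> : s z = p.
          by apply/ffunP => i; rewrite ffunE; case: ifP => // _; rewrite Hz; case: (p i).
        by move: pS; rewrite inE.
      + move=> gs; have e : s z = p by apply: Hp => //; rewrite inE.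
        apply/forallP => j.
        move: (congr1 (fun w : {ffun 'I_n -> bool} => w (enum_val j)) e) => /=.
        rewrite ffunE (enum_valP j) enum_valK_in.
        by case: (z j); case: (p (enum_val j)).
    apply: (noAND #|F'| cF').
    apply: CC_ext (H _ s Hs t) => z.
    by rewrite E Hg.
have Ha := key (fun x => ~~ f x) true (fun x => erefl).
have Hb := key f false (fun x => erefl).
apply: final_arith ab _ _.
- apply: Ha; apply/card_gt0P.
  by case E: (f x0); [exists y0; move: Hxy; rewrite E inE; case: (f y0) | exists x0; rewrite inE E].
- apply: Hb; apply/card_gt0P.
  by case E: (f x0); [exists x0; rewrite inE E | exists y0; move: Hxy; rewrite E inE; case: (f y0)].
Qed.
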